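(* Let $C$ be an open cone in $V$ and let $T$ be an open cone in $V$. Then $T\in\mathscr T(C)$ if and only if the dual cone $T^*$ is an extreme set of $C^*$.
   Context: $V$ is a finite-dimensional real vector space with dual $V^*$. An open cone is a nonempty open convex set $T\subset V$ with $\lambda T\subseteq T$ for all $\lambda>0$ and $0\notin T$; $\partial T$ is its boundary in $V$. Open tangent cone at $x\in\partial T$: $\tau(T,x):=\{\lambda(y-x):\lambda>0,\ y\in T\}$. For a set of cones $\mathbb T$, $\Gamma(\mathbb T):=\{\tau(T,x):T\in\mathbb T,\ x\in\partial T\}$ and $\mathscr T(C):=\bigcup_{k\ge1}\Gamma^k(\{C\})$. Dual cone: $T^*:=\{z\in V^*:\langle z,x\rangle\ge0\ \forall x\in T\}$. A convex subset $E$ of a convex set $K$ is an extreme set if whenever a relative interior point of a line segment in $K$ lies in $E$, both endpoints of the segment lie in $E$. *)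

(* Defs.v *)
(* V = 'rV[R]_n, V^* = 'rV[R]_n with the
   standard pairing <z,x> = \sum_i z_i x_i. *)
From HB Require Import structures.
From mathcomp Require Import all_boot all_order all_algebra.
From mathcomp Require Import all_classical all_reals all_analysis.
Set Implicit Arguments. Unset Strict Implicit. Unset Printing Implicit Defensive.
Import Order.TTheory GRing.Theory Num.Theory.
Import numFieldNormedType.Exports.
Local Open Scope classical_set_scope.
Local Open Scope ring_scope.

Section Cones.
Variables (R : realType) (n : nat).
Notation V := 'rV[R]_n.

Definition pairing (z x : V) : R := \sum_(i < n) z ord0 i * x ord0 i.

Definition convex_set (A : set V) : Prop :=
  forall x y, A x -> A y -> forall t : R, 0 <= t -> t <= 1 ->
    A ((1 - t) *: x + t *: y).

Definition open_cone (T : set V) : Prop :=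
  [/\ T !=set0, open T, convex_set T,
      (forall (l : R) x, 0 < l -> T x -> T (l *: x)) & ~ T 0].

Definition boundary (A : set V) : set V := closure A `\` interior A.

Definition tangent_cone (T : set V) (x : V) : set V :=
  [set v | exists l : R, 0 < l /\ exists y, T y /\ v = l *: (y - x)].

Definition Gamma (F : set (set V)) : set (set V) :=
  [set S | exists T, F T /\ exists x, boundary T x /\ S = tangent_cone T x].

Definition tangent_family (C : set V) : set (set V) :=
  [set S | exists k : nat, (1 <= k)%N /\ iter k Gamma [set C] S].

Definition dual_cone (T : set V) : set V :=
  [set z | forall x, T x -> 0 <= pairing z x].

Definition extreme_set (E K : set V) : Prop :=
  [/\ convex_set E, E `<=` K &
      forall a b, K a -> K b -> a != b -> forall t : R, 0 < t -> t < 1 ->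
        E ((1 - t) *: a + t *: b) -> E a /\ E b].

End Cones.

(* Main.v *)
Require Import Defs.
From HB Require Import structures.
From mathcomp Require Import all_boot all_order all_algebra.
From mathcomp Require Import all_classical all_reals all_analysis.
From mathcomp Require Import lra ring zify.
Set Implicit Arguments. Unset Strict Implicit. Unset Printing Implicit Defensive.
Import Order.TTheory GRing.Theory Num.Theory.
Import numFieldNormedType.Exports.
Local Open Scope classical_set_scope.
Local Open Scope ring_scope.

Section Alg.
Variable R : realType.

Lemma pairingDr n (z x y : 'rV[R]_n) : pairing z (x + y) = pairing z x + pairing z y.
Proof. by rewrite /pairing -big_split /=; apply: eq_bigr => i _; rewrite mxE mulrDr. Qed.
Lemma pairingZr n (z x : 'rV[R]_n) a : pairing z (a *: x) = a * pairing z x.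
Proof. by rewrite /pairing mulr_sumr; apply: eq_bigr => i _; rewrite mxE mulrCA. Qed.
Lemma pairingC n (z x : 'rV[R]_n) : pairing z x = pairing x z.
Proof. by rewrite /pairing; apply: eq_bigr => i _; rewrite mulrC. Qed.
Lemma pairingDl n (z w x : 'rV[R]_n) : pairing (z + w) x = pairing z x + pairing w x.
Proof. by rewrite pairingC pairingDr !(pairingC x). Qed.
Lemma pairingZl n (z x : 'rV[R]_n) a : pairing (a *: z) x = a * pairing z x.
Proof. by rewrite pairingC pairingZr pairingC. Qed.
Lemma pairingNr n (z x : 'rV[R]_n) : pairing z (- x) = - pairing z x.
Proof. by rewrite -scaleN1r pairingZr mulN1r. Qed.
Lemma pairingBr n (z x y : 'rV[R]_n) : pairing z (x - y) = pairing z x - pairing z y.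
Proof. by rewrite pairingDr pairingNr. Qed.
Lemma pairing0r n (z : 'rV[R]_n) : pairing z 0 = 0.
Proof. by rewrite -(scale0r 0) pairingZr mul0r. Qed.
Lemma pairing0l n (z : 'rV[R]_n) : pairing 0 z = 0.
Proof. by rewrite pairingC pairing0r. Qed.
Lemma pairing_self_gt0 n (z : 'rV[R]_n) : z != 0 -> 0 < pairing z z.
Proof.
move=> nz; rewrite lt_def sumr_ge0 ?andbT; last by move=> i _; rewrite -expr2 sqr_ge0.
apply: contraNN nz => /eqP /psumr_eq0P H.
apply/eqP/rowP => j; rewrite mxE; apply/eqP; rewrite -sqrf_eq0 expr2.
by apply/eqP; apply: H => // i _; rewrite -expr2 sqr_ge0.
Qed.

Definition hd n (x : 'rV[R]_n.+1) : R := x ord0 ord0.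
Definition tl n (x : 'rV[R]_n.+1) : 'rV[R]_n := \row_(j < n) x ord0 (lift ord0 j).
Definition cons n (c : R) (y : 'rV[R]_n) : 'rV[R]_n.+1 :=
  \row_(i < n.+1) (if unlift ord0 i is Some j then y ord0 j else c).

Lemma pairing_rec n (z x : 'rV[R]_n.+1) : pairing z x = hd z * hd x + pairing (tl z) (tl x).
Proof. by rewrite /pairing big_ord_recl; congr (_ + _); apply: eq_bigr => i _; rewrite !mxE. Qed.
Lemma hd_cons n c (y : 'rV[R]_n) : hd (cons c y) = c.
Proof. by rewrite /hd mxE unlift_none. Qed.
Lemma tl_cons n c (y : 'rV[R]_n) : tl (cons c y) = y.
Proof. by apply/rowP => j; rewrite !mxE liftK. Qed.
Lemma cons_hd_tl n (x : 'rV[R]_n.+1) : cons (hd x) (tl x) = x.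
Proof.
apply/rowP => i; rewrite !mxE; case: unliftP => [j ->|->]; first by rewrite !mxE.
by rewrite /hd (ord1 ord0).
Qed.
Lemma hdD n (x y : 'rV[R]_n.+1) : hd (x + y) = hd x + hd y. Proof. by rewrite /hd mxE. Qed.
Lemma hdZ n (x : 'rV[R]_n.+1) a : hd (a *: x) = a * hd x. Proof. by rewrite /hd mxE. Qed.
Lemma tlD n (x y : 'rV[R]_n.+1) : tl (x + y) = tl x + tl y.
Proof. by apply/rowP => j; rewrite !mxE. Qed.
Lemma tlZ n (x : 'rV[R]_n.+1) a : tl (a *: x) = a *: tl x.
Proof. by apply/rowP => j; rewrite !mxE. Qed.
Lemma tl0 n : tl (0 : 'rV[R]_n.+1) = 0. Proof. by apply/rowP => j; rewrite !mxE. Qed.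
Lemma hd0 n : hd (0 : 'rV[R]_n.+1) = 0. Proof. by rewrite /hd mxE. Qed.


Definition cone n (K : set 'rV[R]_n) :=
  (forall x y, K x -> K y -> K (x + y)) /\ (forall (l : R) x, 0 < l -> K x -> K (l *: x)).

Lemma cons0D n (x y : 'rV[R]_n) : cons 0 (x + y) = cons 0 x + cons 0 y.
Proof. by apply/rowP => i; rewrite !mxE; case: unlift => [j|]; rewrite ?mxE ?addr0. Qed.
Lemma cons0Z n (x : 'rV[R]_n) a : cons 0 (a *: x) = a *: cons 0 x.
Proof. by apply/rowP => i; rewrite !mxE; case: unlift => [j|]; rewrite ?mxE ?mulr0. Qed.
Lemma cons00 n : cons 0 (0 : 'rV[R]_n) = 0.
Proof. by apply/rowP => i; rewrite !mxE; case: unlift => [j|]; rewrite ?mxE. Qed.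
Lemma hd0_cons n (x : 'rV[R]_n.+1) : hd x = 0 -> x = cons 0 (tl x).
Proof. by move=> h; rewrite -h cons_hd_tl. Qed.
Lemma pairing_cons n c (w : 'rV[R]_n) k : pairing (cons c w) k = c * hd k + pairing w (tl k).
Proof. by rewrite pairing_rec hd_cons tl_cons. Qed.

Lemma aux1 (a W s : R) : a < 0 -> 0 <= (- a)^-1 * W - s -> 0 <= s * a + W.
Proof.
move=> ha H; have e : (-a) * (-a)^-1 = 1 by rewrite mulfV // oppr_eq0 lt_eqF.
have ha' : 0 < - a by rewrite oppr_gt0.
have := mulr_ge0 (ltW ha') H; rewrite mulrBr mulrA e mul1r; nra.
Qed.
Lemma aux2 (a W s : R) : 0 < a -> 0 <= s + a^-1 * W -> 0 <= s * a + W.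
Proof.
move=> ha H; have e : a * a^-1 = 1 by rewrite mulfV // gt_eqF.
have := mulr_ge0 (ltW ha) H; rewrite mulrDr mulrA e mul1r; nra.
Qed.
Lemma S0 n (K : set 'rV[R]_n) : K !=set0 -> cone K -> ~ K 0 ->
  exists z, (forall k, K k -> 0 <= pairing z k) /\ exists2 k, K k & 0 < pairing z k.
Proof.
elim: n K => [|n IH] K [k0 Kk0] [KD KZ] K0.
  by exfalso; apply: K0; suff -> : (0 : 'rV[R]_0) = k0 by []; apply/rowP => -[].
pose K' := [set y : 'rV[R]_n | K (cons 0 y)].
have cK' : cone K'.
  by split=> [x y Kx Ky|l x l0 Kx]; rewrite /K' /= ?cons0D ?cons0Z; [apply: KD|apply: KZ].
have nK' : ~ K' 0 by rewrite /K' /= cons00.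
have inK' k : K k -> hd k = 0 -> K' (tl k) by move=> Kk h; rewrite /K' /= -hd0_cons.
have normP k : K k -> 0 < hd k -> K ((hd k)^-1 *: k) /\ hd ((hd k)^-1 *: k) = 1.
  by move=> Kk h; split; [apply: KZ; rewrite ?invr_gt0|rewrite hdZ mulVf // gt_eqF].
have normN k : K k -> hd k < 0 -> K ((- hd k)^-1 *: k) /\ hd ((- hd k)^-1 *: k) = -1.
  move=> Kk h; split; first by apply: KZ; rewrite ?invr_gt0 ?oppr_gt0.
  by rewrite hdZ invrN mulNr mulVf // lt_eqF.
have [[kp [Kkp hp]]|nP] := pselect (exists k, K k /\ 0 < hd k);
have [[kn [Kkn hn]]|nN] := pselect (exists k, K k /\ hd k < 0).
-
  have key u v : K u -> hd u = 1 -> K v -> hd v = -1 ->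
     forall w : 'rV[R]_n, (forall y, K' y -> 0 <= pairing w y) ->
     - pairing w (tl u) <= pairing w (tl v).
    move=> Ku hu Kv hv w Hw; rewrite -subr_ge0 opprK -pairingDr -tlD; apply: Hw.
    by apply: inK'; [apply: KD|rewrite hdD hu hv; lra].
  have [Kup hup] := normP _ Kkp hp; have [Kun hun] := normN _ Kkn hn.
  have [w [Hw [y1 Ky1 Hy1]]] : exists w, (forall k, K' k -> 0 <= pairing w k) /\
      exists2 k, K' k & 0 < pairing w k.
    by apply: IH => //; exists (tl ((hd kp)^-1 *: kp + (- hd kn)^-1 *: kn));
      apply: inK'; [apply: KD|rewrite hdD hup hun; lra].
  pose L := [set r | exists u, [/\ K u, hd u = 1 & r = - pairing w (tl u)]].
  have Lub v : K v -> hd v = -1 -> ubound L (pairing w (tl v)).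
    by move=> Kv hv r [u [Ku hu ->]]; apply: key.
  have L0 : L !=set0 by exists (- pairing w (tl ((hd kp)^-1 *: kp))); exists ((hd kp)^-1 *: kp).
  have hL : has_ubound L by exists (pairing w (tl ((- hd kn)^-1 *: kn))); apply: Lub.
  exists (cons (sup L) w); split; last first.
    by exists (cons 0 y1) => //; rewrite pairing_cons hd_cons mulr0 add0r tl_cons.
  move=> k Kk; rewrite pairing_cons.
  case: (ltgtP (hd k) 0) => hk.
  + have [Kv hv] := normN _ Kk hk.
    have := ge_sup L0 (Lub _ Kv hv); rewrite tlZ pairingZr -subr_ge0 => H.
    by apply: aux1.
  + have [Ku hu] := normP _ Kk hk.
    have : L (- pairing w (tl ((hd k)^-1 *: k))) by exists ((hd k)^-1 *: k).
    move=> /(ub_le_sup hL); rewrite tlZ pairingZr -subr_ge0 opprK => H.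
    by apply: aux2.
  + by rewrite hk mulr0 add0r; apply: Hw; apply: inK'.
-
  exists (cons 1 0); split; last by exists kp; rewrite // pairing_cons pairing0l addr0 mul1r.
  move=> k Kk; rewrite pairing_cons pairing0l addr0 mul1r.
  by rewrite leNgt; apply/negP => h; apply: nN; exists k.
- exists (cons (-1) 0); split; last by exists kn; rewrite // pairing_cons pairing0l addr0 mulN1r oppr_gt0.
  move=> k Kk; rewrite pairing_cons pairing0l addr0 mulN1r oppr_ge0.
  by rewrite leNgt; apply/negP => h; apply: nP; exists k.
- have hd0 k : K k -> hd k = 0.
    move=> Kk; case: (ltgtP (hd k) 0) => // h; [by exfalso; apply: nN; exists k|by exfalso; apply: nP; exists k].
  have [w [Hw [y1 Ky1 Hy1]]] : exists w, (forall k, K' k -> 0 <= pairing w k) /\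
      exists2 k, K' k & 0 < pairing w k.
    by apply: IH => //; exists (tl k0); apply: inK'; rewrite ?hd0.
  exists (cons 0 w); split; last by exists (cons 0 y1); rewrite // pairing_cons mul0r add0r tl_cons.
  by move=> k Kk; rewrite pairing_cons mul0r add0r; apply: Hw; apply: inK'; rewrite ?hd0.
Qed.

End Alg.

Section Geo.
Variables (R : realType) (n : nat).
Local Notation V := 'rV[R]_n.

Lemma cone_convex (K : set V) : cone K -> Defs.convex_set K.
Proof.
move=> [KD KZ] x y Kx Ky t t0 t1.
case: (eqVneq t 0) => [->|tn0]; first by rewrite subr0 scale1r scale0r addr0.
case: (eqVneq t 1) => [->|tn1]; first by rewrite subrr scale0r add0r scale1r.
apply: KD; apply: KZ => //; first by rewrite subr_gt0 lt_neqAle tn1 t1.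
by rewrite lt_neqAle eq_sym tn0 t0.
Qed.

Lemma convex_cone (K : set V) : Defs.convex_set K ->
  (forall (l : R) x, 0 < l -> K x -> K (l *: x)) -> cone K.
Proof.
move=> cK KZ; split => // x y Kx Ky.
have -> : x + y = 2 *: ((1 - 2^-1) *: x + 2^-1 *: y).
  have -> : (1 - 2^-1 : R) = 2^-1 by field.
  by rewrite scalerDr !scalerA mulfV ?pnatr_eq0 // !scale1r.
apply: KZ => //; apply: cK => //; rewrite ?invr_ge0 ?ler0n //.
by rewrite invf_le1 ?ltr0n // ler1n.
Qed.

Lemma open_cone_cone (T : set V) : open_cone T -> cone T.
Proof. by case=> _ _ cT TZ _; apply: convex_cone. Qed.

Lemma dual0 (T : set V) : dual_cone T 0.
Proof. by move=> x _; rewrite pairing0l. Qed.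
Lemma dualD (T : set V) z w : dual_cone T z -> dual_cone T w -> dual_cone T (z + w).
Proof. by move=> hz hw x Tx; rewrite pairingDl addr_ge0 ?hz ?hw. Qed.
Lemma dualZ (T : set V) (l : R) z : 0 <= l -> dual_cone T z -> dual_cone T (l *: z).
Proof. by move=> l0 hz x Tx; rewrite pairingZl mulr_ge0 ?hz. Qed.
Lemma dual_convex (T : set V) : Defs.convex_set (dual_cone T).
Proof.
move=> x y hx hy t t0 t1; apply: dualD; apply: dualZ => //.
by rewrite subr_ge0.
Qed.

Lemma limlem (a b : R) : (forall l, 0 < l -> 0 <= a + l * b) -> 0 <= a.
Proof.
move=> H; rewrite leNgt; apply/negP => ha.
case: (lerP b 0) => hb; first by have := H 1 ltr01; lra.
have hl : 0 < - a / (2 * b) by rewrite divr_gt0 ?mulr_gt0 // oppr_gt0.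
have := H _ hl; have -> : - a / (2 * b) * b = - a / 2 by field; rewrite gt_eqF.
lra.
Qed.

Lemma limlem2 (a b : R) : (forall s, 0 < s -> a <= s * b) -> 0 <= b.
Proof.
move=> H; rewrite leNgt; apply/negP => hb.
case: (lerP 0 a) => ha; first by have := H 1 ltr01; lra.
have hs : 0 < (1 - a) / (- b) by rewrite divr_gt0 // ?oppr_gt0 //; lra.
have := H _ hs; have -> : (1 - a) / (- b) * b = a - 1 by field; rewrite lt_eqF.
lra.
Qed.

Lemma sepS (T : set V) x : T !=set0 -> cone T -> ~ T 0 -> ~ T x ->
  exists z, [/\ z != 0, dual_cone T z & pairing z x <= 0].
Proof.
move=> [y0 Ty0] [TD TZ] T0 Tx.
pose K := [set v | exists y l, [/\ T y, 0 <= l & v = y - l *: x]].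
have [z [Hz [k Kk Hk]]] : exists z, (forall k, K k -> 0 <= pairing z k) /\
    exists2 k, K k & 0 < pairing z k.
  apply: S0.
  - by exists y0; exists y0, 0; rewrite scale0r subr0.
  - split.
    + move=> _ _ [y1 [l1 [T1 l1p ->]]] [y2 [l2 [T2 l2p ->]]].
      exists (y1 + y2), (l1 + l2); split; rewrite ?addr_ge0 ?scalerDl //; first by apply: TD.
      by rewrite opprD addrACA.
    + move=> l _ l0 [y [m [Ty m0 ->]]]; exists (l *: y), (l * m).
      by rewrite scalerBr scalerA mulr_ge0 // ?ltW //; split => //; apply: TZ.
  - move=> [y [l [Ty l0 e]]]; move/eqP: e; rewrite eq_sym subr_eq0 => /eqP e.
    case: (eqVneq l 0) => [l00|ln0].
      have y00 : y = 0 by rewrite e l00 scale0r.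
      by apply: T0; rewrite -y00.
    apply: Tx; have -> : x = l^-1 *: y by rewrite e scalerA mulVf // scale1r.
    by apply: TZ => //; rewrite invr_gt0 lt_neqAle eq_sym ln0.
have zT : dual_cone T z.
  by move=> y Ty; have := Hz (y - 0 *: x); rewrite scale0r subr0; apply; exists y, 0; rewrite scale0r subr0.
exists z; split => //.
- by apply/eqP => z0; move: Hk; rewrite z0 pairing0l ltxx.
- rewrite leNgt; apply/negP => hx.
  have l0 : 0 <= (pairing z y0 + 1) / pairing z x 
    by apply: divr_ge0; [apply: addr_ge0 => //; apply: zT|exact: ltW].
  have := Hz (y0 - ((pairing z y0 + 1) / pairing z x) *: x).
  rewrite pairingBr pairingZr mulfVK ?gt_eqF //.
  have : exists y l, [/\ T y, 0 <= l & y0 - ((pairing z y0 + 1) / pairing z x) *: x = y - l *: x].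
    by exists y0, ((pairing z y0 + 1) / pairing z x).
  by move=> h /(_ h); lra.
Qed.


Lemma ballE (x y : V) e : ball x e y <-> `|x - y| < e.
Proof. by rewrite -ball_normE. Qed.

Lemma norm_entry (x : V) i : `|x ord0 i| <= `|x|.
Proof.
have := le_bigmax 0 (fun ij : 'I_1 * 'I_n => `|x ij.1 ij.2|) (ord0, i).
by rewrite -mx_normrE.
Qed.

Lemma pairing_bound (z x : V) : `|pairing z x| <= (\sum_i `|z ord0 i|) * `|x|.
Proof.
rewrite /pairing mulr_suml; apply: le_trans (ler_norm_sum _ _ _) _.
apply: ler_sum => i _; rewrite normrM; apply: ler_wpM2l => //; exact: norm_entry.
Qed.

Lemma CL (A : set V) z x : closure A x -> (forall y, A y -> 0 <= pairing z y) -> 0 <= pairing z x.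
Proof.
move=> cl H; rewrite leNgt; apply/negP => hx.
pose M := \sum_i `|z ord0 i| + 1.
have M0 : 0 < M by rewrite ltr_wpDl ?sumr_ge0.
have e0 : 0 < - pairing z x / M by rewrite divr_gt0 ?oppr_gt0.
have [y [Ay By]] : A `&` ball x (- pairing z x / M) !=set0.
  by apply: cl; apply/nbhs_ballP; exists (- pairing z x / M).
move/ballE: By => By.
have := pairing_bound z (y - x); rewrite pairingBr => hb.
have hy := H y Ay.
have h1 : `|y - x| * M < - pairing z x.
  by rewrite -ltr_pdivlMr // -normrN opprB.
have h2 : (\sum_i `|z ord0 i|) * `|y - x| <= `|y - x| * M.
  by rewrite mulrC ler_wpM2l // lerDl.
have := ler_norm (pairing z y - pairing z x).
lra.
Qed.

Lemma open_ball (T : set V) x : open T -> T x -> exists2 e : R, 0 < e & ball x e `<=` T.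
Proof. by move=> oT Tx; have := oT x Tx; rewrite /interior /= nbhs_ballP; case=> e /= e0 H; exists e. Qed.

Lemma open_step (T : set V) x d : open T -> T x -> exists2 e : R, 0 < e & T (x + e *: d).
Proof.
move=> oT Tx; have [e e0 H] := open_ball oT Tx.
have h : 0 < e / (`|d| + 1) by rewrite divr_gt0 // ltr_wpDl.
exists (e / (`|d| + 1)) => //; apply: H; apply/ballE.
rewrite opprD addNKr normrN normrZ gtr0_norm // -mulrA gtr_pMr //.
by rewrite ltr_pdivrMl ?mulr1 ?ltrDl // ltr_wpDl.
Qed.

Lemma closure_step (T : set V) x p : (forall e : R, 0 < e -> T (x + e *: p)) -> closure T x.
Proof.
move=> H B /nbhs_ballP [e /= e0 HB].
have h : 0 < e / (`|p| + 1) by rewrite divr_gt0 // ltr_wpDl.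
exists (x + (e / (`|p| + 1)) *: p); split; first exact: H.
apply: HB; apply/ballE.
rewrite opprD addNKr normrN normrZ gtr0_norm // -mulrA gtr_pMr //.
by rewrite ltr_pdivrMl ?mulr1 ?ltrDl // ltr_wpDl.
Qed.


Lemma D1 (S : set V) x z : open_cone S -> S x -> dual_cone S z -> z != 0 -> 0 < pairing z x.
Proof.
move=> [_ oS _ _ _] Sx dz nz.
have [e e0 He] := open_step (- z) oS Sx.
have := dz _ He; rewrite pairingDr pairingZr pairingNr.
have := pairing_self_gt0 nz => hzz.
have := mulr_gt0 e0 hzz; lra.
Qed.

Lemma CD (S : set V) x : open_cone S -> (forall g, dual_cone S g -> 0 <= pairing g x) -> closure S x.
Proof.
move=> oS H; have oS' := oS; case: oS' => [[p Sp] _ _ _ S0'].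
apply: (@closure_step _ _ p) => e e0.
apply: contrapT => nS.
have Sne : S !=set0 by exists p.
have [z [nz dz hz]] := sepS Sne (open_cone_cone oS) S0' nS.
move: hz; rewrite pairingDr pairingZr.
have := D1 oS Sp dz nz; have := H z dz => h1 h2.
have := mulr_gt0 e0 h2; lra.
Qed.

Lemma nonzero_dual (T : set V) : open_cone T -> exists2 f, dual_cone T f & f != 0.
Proof.
move=> oT; have oT' := oT; case: oT' => [T0 _ _ _ nT0].
have [z [Hz [k Tk hk]]] := S0 T0 (open_cone_cone oT) nT0.
exists z => //; apply/eqP => z0; by move: hk; rewrite z0 pairing0l ltxx.
Qed.

Lemma sub_open_cones (S T : set V) : open_cone S -> open_cone T ->
  dual_cone T `<=` dual_cone S -> S `<=` T.
Proof.
move=> oS oT dTS x Sx; apply: contrapT => nT.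
have oT' := oT; case: oT' => [T0 _ _ _ nT0].
have [z [nz dz hz]] := sepS T0 (open_cone_cone oT) nT0 nT.
have := D1 oS Sx (dTS _ dz) nz; lra.
Qed.

Lemma DT (S : set V) x z : S !=set0 -> (forall (l : R) y, 0 < l -> S y -> S (l *: y)) ->
  closure S x -> (dual_cone (tangent_cone S x) z <-> dual_cone S z /\ pairing z x = 0).
Proof.
move=> [y0 Sy0] SZ cx; split.
- move=> dz.
  have H s y : 0 < s -> S y -> 0 <= s * pairing z y - pairing z x.
    move=> s0 Sy; have := dz (1 *: (s *: y - x)).
    rewrite scale1r pairingBr pairingZr; apply.
    by exists 1; split => //; exists (s *: y); split; [exact: SZ|rewrite scale1r].
  have dS : dual_cone S z.
    move=> y Sy; apply: (@limlem2 (pairing z x)) => s s0.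
    by have := H s y s0 Sy; lra.
  split => //; apply/eqP; rewrite eq_le (CL cx dS) andbT.
  rewrite -oppr_ge0; apply: (@limlem _ (pairing z y0)) => l l0.
  by have := H l y0 l0 Sy0; lra.
- move=> [dS zx] _ [l [l0 [y [Sy ->]]]].
  by rewrite pairingZr pairingBr zx subr0; apply: mulr_ge0; [exact: ltW|exact: dS].
Qed.

Lemma tangent_open (S : set V) x : open S -> open (tangent_cone S x).
Proof.
move=> oS; rewrite openE => v [l [l0 [y [Sy ->]]]].
have [e e0 He] := open_ball oS Sy.
rewrite /interior /= nbhs_ballP; exists (l * e); first by rewrite /= mulr_gt0.
move=> v' /ballE hv'.
exists l; split => //; exists (l^-1 *: v' + x); split.
  apply: He; apply/ballE.
  have -> : y - (l^-1 *: v' + x) = l^-1 *: (l *: (y - x) - v').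
    by rewrite scalerBr scalerA mulVf ?gt_eqF // scale1r opprD addrA addrAC.
  by rewrite normrZ gtr0_norm ?invr_gt0 // ltr_pdivrMl.
by rewrite addrK scalerA mulfV ?gt_eqF // scale1r.
Qed.

Lemma OTC (S : set V) x : open_cone S -> ~ S x -> open_cone (tangent_cone S x).
Proof.
move=> oS nSx; have oS' := oS; case: oS' => [[y0 Sy0] oS1 _ _ _].
have [SD SZ] := open_cone_cone oS.
have tZ (l : R) v : 0 < l -> tangent_cone S x v -> tangent_cone S x (l *: v).
  move=> l0 [m [m0 [y [Sy ->]]]]; exists (l * m); split; first by rewrite mulr_gt0.
  by exists y; rewrite scalerA.
split.
- by exists (1 *: (y0 - x)); exists 1; split => //; exists y0.
- exact: tangent_open.
- apply: cone_convex; split => //.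
  move=> _ _ [l1 [l10 [y1 [Sy1 ->]]]] [l2 [l20 [y2 [Sy2 ->]]]].
  have l0 : 0 < l1 + l2 by rewrite addr_gt0.
  exists (l1 + l2); split => //; exists ((l1 + l2)^-1 *: (l1 *: y1 + l2 *: y2)); split.
    by apply: (SZ); rewrite ?invr_gt0 //; apply: (SD); apply: (SZ).
  rewrite [RHS]scalerBr scalerA mulfV ?gt_eqF // scale1r !scalerBr scalerDl.
  by rewrite opprD addrACA.
- exact: tZ.
- move=> [l [l0 [y [Sy]]]] /esym /eqP; rewrite scaler_eq0 gt_eqF //= subr_eq0 => /eqP yx.
  by apply: nSx; rewrite -yx.
Qed.


Lemma fwd (C : set V) : open_cone C -> forall k S, iter k (@Gamma R n) [set C] S ->
  [/\ S !=set0, (forall (l : R) y, 0 < l -> S y -> S (l *: y)) &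
      extreme_set (dual_cone S) (dual_cone C)].
Proof.
move=> [C0 _ _ CZ _]; elim=> [|k IH] S /=.
  move=> ->; split => //; split => //; first exact: dual_convex.
move=> [T [HT [x [[cx _] ->]]]].
have [[y0 Ty0] TZ [_ sub face]] := IH T HT.
have DTx z := DT z (ex_intro _ y0 Ty0) TZ cx.
split.
- by exists (1 *: (y0 - x)); exists 1; split => //; exists y0.
- move=> l v l0 [m [m0 [y [Ty ->]]]]; exists (l * m); split; first by rewrite mulr_gt0.
  by exists y; rewrite scalerA.
- split.
  + exact: dual_convex.
  + by move=> z /DTx [/sub].
  + move=> a b Ka Kb ab t t0 t1 /DTx [dT hx].
    have [da db] := face a b Ka Kb ab t t0 t1 dT.
    have ha := CL cx da; have hb := CL cx db.
    move: hx; rewrite pairingDl !pairingZl => hx.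
    have ha0 : pairing a x = 0 by nra.
    have hb0 : pairing b x = 0 by nra.
    by split; apply/DTx.
Qed.


Lemma addAC6 (a b c d e f : V) :
  a - b + c + (d - e + f) = (a + d) - (b + e) + (c + f).
Proof. rewrite addrACA. rewrite opprD. rewrite (addrACA a). by []. Qed.

Lemma expose (C S T : set V) g0 : extreme_set (dual_cone T) (dual_cone C) ->
  dual_cone S `<=` dual_cone C -> dual_cone T `<=` dual_cone S ->
  dual_cone S g0 -> ~ dual_cone T g0 ->
  exists x, [/\ forall g, dual_cone S g -> 0 <= pairing g x,
     forall f, dual_cone T f -> pairing f x = 0 &
     exists2 g, dual_cone S g & 0 < pairing g x].
Proof.
move=> [_ _ face] SC TS Sg0 nTg0.
pose K := [set v | exists g f l, [/\ dual_cone S g, dual_cone T f, 0 < l & v = g - f + l *: g0]].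
have [z [Hz [k [g [f [l [dg df l0 ->]]]] hk]]] : exists z, (forall k, K k -> 0 <= pairing z k) /\
    exists2 k, K k & 0 < pairing z k.
  apply: S0.
  - by exists (0 - 0 + 1 *: g0); exists 0, 0, 1; split => //; apply: dual0.
  - split.
    + move=> _ _ [g1 [f1 [l1 [dg1 df1 l10 ->]]]] [g2 [f2 [l2 [dg2 df2 l20 ->]]]].
      exists (g1 + g2), (f1 + f2), (l1 + l2); split; rewrite ?addr_gt0 //; try exact: dualD.
      by rewrite addAC6 scalerDl.
    + move=> a _ a0 [g1 [f1 [l1 [dg1 df1 l10 ->]]]].
      exists (a *: g1), (a *: f1), (a * l1); split; rewrite ?mulr_gt0 //; try (apply: dualZ => //; exact: ltW).
      by rewrite scalerDr scalerBr scalerA.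
  - move=> [g [f [l [dg df l0 e]]]].
    move/eqP: e; rewrite eq_sym addrAC subr_eq0 => /eqP ef.
    have hb : dual_cone T (2 *: (l *: g0)).
      have Ca : dual_cone C (2 *: g) by apply: dualZ; rewrite ?ler0n //; apply: SC.
      have Cb : dual_cone C (2 *: (l *: g0)).
        by apply: dualZ; rewrite ?ler0n //; apply: dualZ; [exact: ltW|apply: SC].
      have cmb : (1 - 2^-1) *: (2 *: g) + 2^-1 *: (2 *: (l *: g0)) = f.
        have -> : (1 - 2^-1 : R) = 2^-1 by field.
        by rewrite !scalerA mulrA mulVf ?pnatr_eq0 // mul1r !scale1r.
      case: (eqVneq (2 *: g) (2 *: (l *: g0))) => [e2|ne].
        have ef2 : f = 2 *: (l *: g0) by rewrite -cmb e2 -scalerDl subrK scale1r.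
        by rewrite -ef2.
      have h2 : (0 : R) < 2^-1 by rewrite invr_gt0 ltr0n.
      have h3 : (2^-1 : R) < 1 by rewrite invf_lt1 ?ltr0n // ltr1n.
      have dfc : dual_cone T ((1 - 2^-1) *: (2 *: g) + 2^-1 *: (2 *: (l *: g0))) by rewrite cmb.
      by have [] := face _ _ Ca Cb ne _ h2 h3 dfc.
    apply: nTg0; have -> : g0 = (2 * l)^-1 *: (2 *: (l *: g0)).
      by rewrite !scalerA mulVf ?scale1r // mulf_neq0 ?pnatr_eq0 ?gt_eqF.
    by apply: dualZ => //; rewrite invr_ge0 mulr_ge0 ?ler0n ?ltW.
have key g' f' l' : dual_cone S g' -> dual_cone T f' -> 0 < l' ->
    0 <= pairing z g' - pairing z f' + l' * pairing z g0.
  move=> dg' df' l0'; have := Hz (g' - f' + l' *: g0).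
  rewrite !pairingDr pairingNr pairingZr; apply.
  by exists g', f', l'.
have ha g' : dual_cone S g' -> 0 <= pairing z g'.
  move=> dg'; apply: (@limlem _ (pairing z g0)) => l' l0'.
  by have := key g' 0 l' dg' (@dual0 T) l0'; rewrite pairing0r subr0.
have hb f' : dual_cone T f' -> pairing z f' = 0.
  move=> df'; apply/eqP; rewrite eq_le (ha _ (TS _ df')) andbT -oppr_ge0.
  apply: (@limlem _ (pairing z g0)) => l' l0'.
  by have := key 0 f' l' (@dual0 S) df' l0'; rewrite pairing0r sub0r.
exists z; split; [by move=> g' /ha; rewrite pairingC|by move=> f' /hb; rewrite pairingC|].
move: hk; rewrite !pairingDr pairingNr pairingZr (hb _ df) subr0 => hk.
case: (lerP (pairing z g) 0) => hg; first by exists g0 => //; rewrite pairingC; nra.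
by exists g => //; rewrite pairingC.
Qed.


Lemma bwd (C T : set V) : open_cone C -> open_cone T ->
  extreme_set (dual_cone T) (dual_cone C) ->
  forall m (U : {vspace V}) k S, (n - \dim U)%N = m ->
  iter k.+1 (@Gamma R n) [set C] S -> open_cone S ->
  (forall g u, dual_cone S g -> u \in U -> pairing g u = 0) ->
  dual_cone T `<=` dual_cone S -> exists k', iter k'.+1 (@Gamma R n) [set C] T.
Proof.
move=> oC oT ext m; elim/ltn_ind: m => m IH U k S em HS oS orth sub.
have [_ _ [_ SC _]] := fwd oC HS.
case: (pselect (dual_cone S `<=` dual_cone T)) => [ST|nST].
  have e : S = T by apply/seteqP; split; apply: sub_open_cones.
  by exists k; rewrite -e.
have [g0 [dSg0 ndT]] : exists g0, dual_cone S g0 /\ ~ dual_cone T g0.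
  apply: contrapT => h; apply: nST => z dz; apply: contrapT => nz; apply: h; exists z.
  by split.
have [x [hxa hxb [g1 dg1 hg1]]] := expose ext SC sub dSg0 ndT.
have cx : closure S x := CD oS hxa.
have nSx : ~ S x.
  move=> Sx; have [f df nf] := nonzero_dual oT.
  by have := D1 oS Sx (sub _ df) nf; rewrite (hxb _ df) ltxx.
have oS' := OTC oS nSx.
have oS2 := oS; case: oS2 => [Sne _ _ SZ _].
have DTx z := DT z Sne SZ cx.
have HS' : iter k.+2 (@Gamma R n) [set C] (tangent_cone S x).
  by exists S; split => //; exists x; split => //; split => // /interior_subset.
have xU : x \notin U.
  by apply/negP => xU; have := orth _ _ dg1 xU; move: hg1; rewrite lt_def => /andP [/eqP].
have x0 : x != 0 by apply: contraNneq xU => ->; rewrite mem0v.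
have capU : (U :&: <[x]>)%VS = 0%VS.
  apply/eqP; rewrite -subv0; apply/subvP => w; rewrite memv_cap => /andP [wU /vlineP [a ea]].
  rewrite memv0; case: (eqVneq a 0) => [a0|an0]; first by rewrite ea a0 scale0r.
  move: wU; rewrite ea => /(memvZ a^-1); rewrite scalerA mulVf // scale1r => xU'.
  by rewrite xU' in xU.
have dimU' : \dim (U + <[x]>)%VS = (\dim U).+1.
  by rewrite dimv_disjoint_sum // dim_vline x0 addn1.
have dimle : (\dim (U + <[x]>)%VS <= n)%N.
  by have := dimvS (subvf (U + <[x]>)%VS); rewrite dimvf dim_matrix mul1r.
apply: (IH (n - \dim (U + <[x]>)%VS)%N _ (U + <[x]>)%VS k.+1 (tangent_cone S x)) => //.
- by rewrite -em; move: dimle; rewrite dimU'; lia.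
- move=> g u /DTx [dg gx] /memv_addP [u1 u1U [v /vlineP [a ->] ->]].
  by rewrite pairingDr pairingZr gx mulr0 addr0 orth.
- by move=> f df; apply/DTx; split; [apply: sub|apply: hxb].
Qed.

End Geo.

Unset Implicit Arguments.
Set Strict Implicit.

Theorem mainTheorem13 (R : realType) (n : nat) (C T : set 'rV[R]_n) :
  open_cone C -> open_cone T ->
  (tangent_family C T <-> extreme_set (dual_cone T) (dual_cone C)).
Proof.
move=> oC oT; split.
  by move=> [k [_ HT]]; have [_ _ ext] := fwd oC HT.
move=> ext.
have oC2 := oC; case: oC2 => [_ _ _ CZ nC0].
have HC : iter 1 (@Gamma R n) [set C] C.
  exists C; split => //; exists 0; split.
    split; first by apply: CD => // g _; rewrite pairing0r.
    by move/interior_subset.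
  apply/seteqP; split.
    by move=> v Cv; exists 1; split => //; exists v; rewrite subr0 scale1r.
  by move=> _ [l [l0 [y [Cy ->]]]]; rewrite subr0; apply: CZ.
have [_ sub _] := ext.
have [k' Hk'] := bwd oC oT ext (erefl (n - \dim (0%VS : {vspace 'rV[R]_n}))%N) HC oC
  (fun g u _ uin => ltac:(by move: uin; rewrite memv0 => /eqP ->; rewrite pairing0r)) sub.
by exists k'.+1.
Qed.
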